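(* Let $J$ be a finite-dimensional Jordan algebra over a field of characteristic different from $2$ such that every linear endomorphism of $J$ is a quasiderivation, i.e. $QDer(J)=End(J)$. Then either $J$ is a field or $J$ has zero multiplication.
   Context: A Jordan algebra is a commutative algebra satisfying $(x^2,y,x)=0$, where $(a,b,c)=(ab)c-a(bc)$. A linear map $f:J\to J$ is a quasiderivation if there exists a linear map $Q:J\to J$ with $Q(xy)=f(x)y+xf(y)$ for all $x,y\in J$; $QDer(J)$ is the set of quasiderivations and $End(J)$ the set of all linear endomorphisms of $J$. *)

(* Defs.v *)
From HB Require Import structures.
From mathcomp Require Import all_boot all_order all_algebra.
Set Implicit Arguments. Unset Strict Implicit. Unset Printing Implicit Defensive.
Import GRing.Theory.
Local Open Scope ring_scope.

Definition bilinear_mul (F : fieldType) (V : vectType F) (mul : V -> V -> V) : Prop :=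
  (forall (a : F) (x y z : V), mul (a *: x + y) z = a *: mul x z + mul y z) /\
  (forall (a : F) (x y z : V), mul x (a *: y + z) = a *: mul x y + mul x z).

Definition associator (F : fieldType) (V : vectType F) (mul : V -> V -> V) (a b c : V) : V :=
  mul (mul a b) c - mul a (mul b c).

Definition jordan_algebra (F : fieldType) (V : vectType F) (mul : V -> V -> V) : Prop :=
  bilinear_mul mul /\
  (forall x y : V, mul x y = mul y x) /\
  (forall x y : V, associator mul (mul x x) y x = 0).

Definition quasiderivation (F : fieldType) (V : vectType F) (mul : V -> V -> V)
  (f : 'End(V)) : Prop :=
  exists Q : 'End(V), forall x y : V, Q (mul x y) = mul (f x) y + mul x (f y).

Definition is_field_algebra (F : fieldType) (V : vectType F) (mul : V -> V -> V) : Prop :=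
  (forall x y z : V, mul (mul x y) z = mul x (mul y z)) /\
  (forall x y : V, mul x y = mul y x) /\
  exists e : V, e != 0 /\ (forall x : V, mul e x = x) /\
    (forall x : V, x != 0 -> exists y : V, mul x y = e).

Definition zero_multiplication (F : fieldType) (V : vectType F) (mul : V -> V -> V) : Prop :=
  forall x y : V, mul x y = 0.

(* Main.v *)
Require Import Defs.
From HB Require Import structures.
From mathcomp Require Import all_boot all_order all_algebra.
From mathcomp Require Import ring.
From Stdlib Require Import Classical.
Import GRing.Theory.
Local Open Scope ring_scope.

Lemma endP (F : fieldType) (V : vectType F) (g : V -> V) :
  linear g -> exists f : 'End(V), forall v, f v = g v.
Proof. move=> H.
pose gL : {linear V -> V} := HB.pack g (GRing.isLinear.Build _ _ _ _ g H).
by exists (linfun gL) => v; rewrite lfunE. Qed.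

Theorem mainTheorem12 (F : fieldType) (V : vectType F) (mul : V -> V -> V)
  (hchar : 2%N \notin [pchar F])
  (hJ : jordan_algebra mul)
  (hQ : forall f : 'End(V), quasiderivation mul f) :
  is_field_algebra mul \/ zero_multiplication mul.
Proof.
move: hJ => [[bl br] [comm _]].
have two : (2%:R : F) != 0.
  by move: hchar; rewrite inE /=.
have mulDr x y z : mul x (y + z) = mul x y + mul x z.
  by rewrite -{1}[y]scale1r br scale1r.
have mul0r' x : mul x 0 = 0.
  have := br (-1) x x x; rewrite scaleN1r addNr scaleN1r => ->.
  by rewrite addNr.
have mulZr x a y : mul x (a *: y) = a *: mul x y.
  by rewrite -[a *: y]addr0 br mul0r' addr0.
have mulZl x a y : mul (a *: x) y = a *: mul y x.
  by rewrite comm mulZr.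
have linr u : linear (mul u).
  by move=> a x y; rewrite br.
pose B := vbasis (fullv : {vspace V}).
have coord0 v : (forall i, coord B i v = 0) -> v = 0.
  move=> H; rewrite (coord_vbasis (memvf v)); apply: big1 => i _.
  by rewrite H scale0r.
have coordnz v : v != 0 -> exists i, coord B i v != 0.
  move=> vn0; case: (pickP (fun i => coord B i v != 0)) => [i Hi|H].
    by exists i.
  by move: vn0; rewrite (coord0 v) ?eqxx // => i; move: (H i) => /= /negbFE/eqP.
have rk1 i c : exists Q : 'End(V), forall x y,
    Q (mul x y) = coord B i x *: mul c y + coord B i y *: mul x c.
  have [f Hf] : exists f : 'End(V), forall v, f v = coord B i v *: c.
    apply: endP => a x y; rewrite linearP /= scalerDl scalerA //.
  have [Q HQ] := hQ f; exists Q => x y; rewrite HQ !Hf mulZl mulZr comm.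
  by rewrite (comm x c).
have claimA a : a != 0 -> mul a a = 0 -> forall c, mul c a = 0.
  move=> an0 aa0 c; have [i Hi] := coordnz a an0.
  have [Q HQ] := rk1 i c; have := HQ a a; rewrite aa0 linear0 (comm a c).
  rewrite -scalerDl => /esym/eqP; rewrite scaler_eq0 => /orP[|/eqP//].
  by rewrite -mulr2n -mulr_natr mulf_eq0 (negbTE Hi) (negbTE two).
have claimB a b : a != 0 -> b != 0 -> mul a b = 0 -> forall c, mul c b = 0.
  move=> an0 bn0 ab0 c; have [i0 Hi0] := coordnz a an0.
  have Heq i : coord B i a *: mul c b + coord B i b *: mul a c = 0.
    by have [Q HQ] := rk1 i c; rewrite -HQ ab0 linear0.
  pose mu := coord B i0 b / coord B i0 a.
  have HX : mul c b = - mu *: mul a c.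
    apply: (scalerI Hi0); rewrite scalerA /mu mulrN mulrCA divff // mulr1.
    by apply/eqP; rewrite scaleNr -subr_eq0 opprK Heq.
  have [Y0|Yn0] := eqVneq (mul a c) 0.
    by rewrite HX Y0 scaler0.
  have bmu : b = mu *: a.
    apply/eqP; rewrite -subr_eq0; apply/eqP/coord0 => i.
    rewrite linearB linearZ /=; apply/eqP; rewrite subr_eq0; apply/eqP.
    have := Heq i; rewrite HX scalerA -scalerDl => /eqP.
    rewrite scaler_eq0 (negbTE Yn0) orbF => /eqP H.
    rewrite -/mu; apply/eqP; rewrite -subr_eq0; apply/eqP; rewrite -H; ring.
  have mun0 : mu != 0 by apply: contraNneq bn0 => m0; rewrite bmu m0 scale0r.
  have aa0 : mul a a = 0.
    by apply/eqP; move: ab0; rewrite bmu mulZr => /eqP; rewrite scaler_eq0 (negbTE mun0).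
  by rewrite bmu mulZr claimA // scaler0.
have ZD : (exists a b, [/\ a != 0, b != 0 & mul a b = 0]) -> zero_multiplication mul.
  move=> [a [b [an0 bn0 ab0]]] x y.
  have [->|yn0] := eqVneq y 0; first by rewrite mul0r'.
  have by0 : mul b y = 0 by rewrite comm (claimB a b).
  exact: (claimB b y).
case: (classic (zero_multiplication mul)) => [Z|NZ]; first by right.
have ND a b : a != 0 -> b != 0 -> mul a b != 0.
  move=> an0 bn0; apply/eqP => ab0; apply: NZ; apply: ZD; by exists a, b.
have [d0|dpos] := posnP (\dim (fullv : {vspace V})).
  right => x y.
  have := memvf (mul x y); move: d0 => /eqP; rewrite dimv_eq0 => /eqP ->.
  by rewrite memv0 => /eqP.
have [d1|d2] := leqP (\dim (fullv : {vspace V})) 1.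
  pose u := vpick (fullv : {vspace V}).
  have un0 : u != 0 by rewrite vpick0 -dimv_eq0 -lt0n.
  have fu : (fullv : {vspace V}) = <[u]>%VS.
    apply/eqP; rewrite eq_sym eqEdim subvf dim_vline un0 /=; exact: d1.
  have rep v : exists k, v = k *: u by apply/vlineP; rewrite -fu memvf.
  have [k Hk] := rep (mul u u).
  have mulE a b : mul (a *: u) (b *: u) = (a * b * k) *: u.
    by rewrite mulZl mulZl Hk !scalerA; congr (_ *: _); ring.
  have [k0|kn0] := eqVneq k 0.
    right => x y; have [a ->] := rep x; have [b ->] := rep y.
    by rewrite mulE k0 mulr0 scale0r.
  left; split; [|split => //].
    move=> x y z; have [a ->] := rep x; have [b ->] := rep y; have [c ->] := rep z.
    by rewrite !mulE; congr (_ *: _); ring.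
  exists (k^-1 *: u); split.
    by rewrite scaler_eq0 invr_eq0 negb_or kn0 un0.
  split.
    move=> x; have [a ->] := rep x.
    by rewrite mulE mulrAC mulVf // mul1r.
  move=> x; have [a ->] := rep x => xn0.
  have an0 : a != 0 by apply: contraNneq xn0 => ->; rewrite scale0r.
  exists ((a * k * k)^-1 *: u).
  rewrite mulE; congr (_ *: _); field.
  by rewrite an0 kn0.
exfalso.
pose i0 : 'I_(\dim (fullv : {vspace V})) := Ordinal dpos.
pose i1 : 'I_(\dim (fullv : {vspace V})) := Ordinal d2.
have frB : free B := basis_free (vbasisP fullv).
pose u := B`_i0; pose w := B`_i1.
have cu : coord B i1 u = 0 by rewrite coord_free.
have cw : coord B i1 w = 1 by rewrite coord_free // eqxx.
have un0 : u != 0.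
  apply/eqP => u0; have := coord_free i0 i0 frB; rewrite -/u u0 linear0 eqxx.
  by move/eqP; rewrite eq_sym oner_eq0.
have [L HL] := @endP _ _ _ (linr u).
have kerL : lker L == 0%VS.
  apply/lker0P => x y Hxy; apply/eqP; rewrite -subr_eq0; apply/negPn/negP => hn.
  by have := ND u (x - y) un0 hn; rewrite -HL linearB /= Hxy subrr eqxx.
pose v := (L^-1)%VF (mul w w).
have Hv : mul u v = mul w w by rewrite -HL lker0_lfunVK.
have [Q HQ] := rk1 i1 u.
have E : mul u ((2%:R : F) *: w + (- coord B i1 v) *: u) = 0.
  have h1 := HQ w w; have h2 := HQ u v.
  rewrite cw cu !scale1r scale0r add0r (comm w u) in h1 h2.
  rewrite Hv in h2.
  by rewrite mulDr !mulZr scaleNr -h2 h1 scaler_nat mulr2n subrr.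
have nz : (2%:R : F) *: w + (- coord B i1 v) *: u != 0.
  apply/eqP => h; have := congr1 (coord B i1) h.
  rewrite linearD !linearZ /= cw cu linear0 mulr1 mulr0 addr0 => h3.
  by rewrite h3 eqxx in two.
by move: (ND u _ un0 nz); rewrite E eqxx.
Qed.
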